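(* Let $\ell$ be a positive odd integer and $n\ge 3$ an integer. Suppose there exist $k$ distinct primes $p_1,\dots,p_k\in P(n)$ such that any two of the numbers $p_1-1,\dots,p_k-1$ have no common odd prime factor. If $\Omega_\ell(n)$ is a powerful number, then $\ell$ has at least $k$ distinct prime factors.
   Context: A positive integer $a$ is called a powerful number if for every prime $p$, $p\mid a$ implies $p^2\mid a$. $\Omega_\ell(n)=\prod_{a=1}^{n}(a^\ell+1)$. For a positive integer $n$, $P(n)$ denotes the set of primes $p$ with $\frac{n+1}{2}<p\le n+1$. *)

(* Defs.v *)
From mathcomp Require Import all_boot.
Set Implicit Arguments. Unset Strict Implicit. Unset Printing Implicit Defensive.

Definition powerful (a : nat) : Prop :=
  0 < a /\ forall p, prime p -> p %| a -> p ^ 2 %| a.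

Definition Omega (l n : nat) : nat := \prod_(1 <= a < n.+1) (a ^ l + 1).

Definition inP (n p : nat) : bool := prime p && (n.+1 < 2 * p) && (p <= n.+1).

(* Main.v *)
Require Import Defs.
From mathcomp Require Import all_boot all_algebra all_field.
From mathcomp Require Import zify ring.
Set Implicit Arguments. Unset Strict Implicit. Unset Printing Implicit Defensive.
Import GRing.Theory Num.Theory.
Local Open Scope ring_scope.

Lemma Fp_dvd p m : prime p -> (p %| m)%N = (m%:R == 0 :> 'F_p).
Proof. by move=> pp; rewrite (dvdn_pcharf (pchar_Fp pp)). Qed.

Lemma key_a (p l a : nat) : prime p -> (2 < p)%N -> odd l -> coprime l p.-1 ->
  (p %| a ^ l + 1)%N -> (p %| a.+1)%N.
Proof.
move=> pp p2 ol cop.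
rewrite !(Fp_dvd _ pp) natrD natrX -[a.+1]addn1 natrD addr_eq0 => /eqP hx.
set x : 'F_p := a%:R in hx *.
have l0 : (0 < l)%N by rewrite lt0n; apply/eqP => l0; rewrite l0 in ol.
have xn0 : x != 0.
  apply/eqP => x0; move: hx; rewrite x0 expr0n (negPf (lt0n_neq0 l0)) => /eqP.
  by rewrite eq_sym oppr_eq0 oner_eq0.
have ferm : x ^+ p.-1 = 1.
  have h := expf_card x; rewrite card_Fp // in h.
  have : x ^+ (p.-1).+1 = x by rewrite prednK // prime_gt0.
  rewrite exprSr.
  by move/(canRL (mulfK xn0)); rewrite divff.
have p1 : (0 < p.-1)%N by rewrite -ltnS prednK ?prime_gt0 //; apply: ltnW.
have [a0 _] := Bezoutr l p1.
rewrite (eqP cop) => /dvdnP [c hc].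
have e1 : x * (-1) ^+ a0 = 1.
  by rewrite -hx -exprM mulnC -exprS -add1n hc mulnC exprM ferm expr1n.
have p2' : (2%:R : 'F_p) != 0.
  by rewrite -Fp_dvd //; apply/negP => /dvdn_leq => /(_ isT); rewrite leqNgt p2.
move: e1; rewrite -signr_odd; case: (odd a0) => /=.
  by rewrite expr1 mulrN1 => /eqP; rewrite eqr_oppLR => /eqP ->; rewrite addNr.
rewrite expr0 mulr1 => x1; move: hx; rewrite x1 expr1n => /eqP.
rewrite -subr_eq0 opprK => h; move: p2'; rewrite (_ : 2%N = 1 + 1)%N // natrD.
Qed.

Lemma PoszX' (m n : nat) : Posz (m ^ n)%N = (Posz m) ^+ n.
Proof. by rewrite -!natz natrX. Qed.

Lemma pow_expand (P : int) (j : nat) :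
  exists t : int, (1 - P) ^+ j = 1 - j%:Z * P + P ^+ 2 * t.
Proof.
elim: j => [|j [t ht]]; first by exists 0; rewrite expr0; ring.
exists (j%:Z + t - P * t); rewrite exprSr ht intS; ring.
Qed.

Lemma key_c (p l : nat) : (0 < p)%N -> odd l ->
  (p ^ 2 %| (p.-1) ^ l + 1)%N -> (p %| l)%N.
Proof.
move=> p0 ol h.
have hz : ((p ^ 2)%:Z %| ((p.-1) ^ l + 1)%N%:Z)%Z by rewrite dvdzE !absz_nat.
have [t ht] := pow_expand p%:Z l.
have e : ((p.-1) ^ l + 1)%N%:Z = (l * p)%N%:Z - (p%:Z) ^+ 2 * t.
  rewrite PoszD PoszX' predn_int // PoszM.
  rewrite -opprB exprNn -signr_odd ol expr1 mulN1r ht; ring.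
have : ((p ^ 2)%:Z %| (l * p)%N%:Z)%Z.
  have -> : (l * p)%N%:Z = ((p.-1) ^ l + 1)%N%:Z + (p%:Z) ^+ 2 * t by rewrite e; ring.
  by rewrite rpredD // PoszX' dvdz_mulr.
rewrite dvdzE !absz_nat expnS expn1 => /dvdnP [c hc].
apply/dvdnP; exists c; apply/eqP; rewrite -(eqn_pmul2r p0).
by rewrite hc mulnA.
Qed.

Lemma key l n p : odd l -> (3 <= n)%N -> inP n p -> powerful (Omega l n) ->
  coprime l p.-1 -> (p %| l)%N.
Proof.
move=> ol n3 /andP [/andP [pp hlt] hle] [O0 pw] cop.
have p2 : (2 < p)%N by lia.
have p0 : (0 < p)%N by lia.
have hb : forall a, (1 <= a < n.+1)%N -> a != p.-1 -> ~~ (p %| a ^ l + 1)%N.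
  move=> a ha ne; apply/negP => /(key_a pp p2 ol cop) /dvdnP [c hc].
  move/eqP: ne; apply; case/andP: ha => ha1 ha2.
  case: c hc => [|[|c]] hc; [lia | lia | nia].
have hp : (p %| (p.-1) ^ l + 1)%N.
  rewrite (Fp_dvd _ pp) natrD natrX.
  have : ((p.-1).+1)%:R = 0 :> 'F_p by rewrite prednK // pchar_Fp_0.
  rewrite mulrSr => /eqP; rewrite addr_eq0 => /eqP ->.
  by rewrite -signr_odd ol expr1 addNr.
have hmem : p.-1 \in index_iota 1 n.+1 by rewrite mem_index_iota; lia.
have huniq : uniq (index_iota 1 n.+1) by rewrite /index_iota iota_uniq.
move: O0 pw; rewrite /Omega (bigD1_seq _ hmem huniq) /=.
set R := (\prod_(i <- _ | _) _)%N => O0 pw.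
have cR : coprime p R.
  rewrite prime_coprime // Euclid_dvd_prod // big_seq_cond big1 // => a /andP [ha ne].
  by apply/negbTE; apply: hb => //; rewrite -mem_index_iota.
have := pw p pp (dvdn_mulr _ hp).
rewrite Gauss_dvdl; last by rewrite coprimeXl.
exact: key_c.
Qed.

Local Close Scope ring_scope.

Lemma oddpr l q : odd l -> q \in primes l -> odd q.
Proof.
move=> ol; rewrite mem_primes => /and3P [qp _ ql].
case: (even_prime qp) => // q2; move: ql; rewrite q2 dvdn2 ol //.
Qed.

Lemma crossC n x y l : odd l -> (3 <= n)%N -> inP n x -> inP n y ->
  y \in primes l -> (y %| x.-1)%N -> False.
Proof.
move=> ol n3 /andP [/andP [xp xlt] xle] /andP [/andP [yp ylt] yle] yl /dvdnP [c hc].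
have oy := oddpr ol yl.
have ex : x = y.+1.
  case: c hc => [|[|c]] hc; [lia | lia | nia].
case: (even_prime xp) => [|]; first lia.
by rewrite ex /= oy.
Qed.

Theorem lemma3 (l n k : nat) (ps : seq nat) :
  odd l -> 3 <= n ->
  size ps = k -> uniq ps ->
  (forall p, p \in ps -> inP n p) ->
  (forall i j, i < k -> j < k -> i != j ->
     forall q, prime q -> odd q ->
       ~ (q %| (nth 0 ps i).-1 /\ q %| (nth 0 ps j).-1)) ->
  powerful (Omega l n) ->
  k <= size (primes l).
Proof.
move=> ol n3 sz uq hP hq pw.
have l0 : (0 < l)%N by rewrite lt0n; apply/eqP => l0; rewrite l0 in ol.
pose f p := head p [seq q <- primes l | (q %| p.-1)%N].
have fP : forall p, p \in ps ->
   (f p \in primes l /\ (f p %| p.-1)%N) \/ (f p = p /\ p \in primes l).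
  move=> p pin; rewrite /f; case E: [seq q <- primes l | (q %| p.-1)%N] => [|q s] /=.
    right; split => //.
    have /andP [/andP [pp hlt] hle] := hP p pin.
    rewrite mem_primes pp l0 /=; apply: (key ol n3 (hP p pin) pw).
    rewrite coprime_has_primes //; last by have := prime_gt1 pp; lia.
    apply/hasPn => q qin /=; apply/negP => ql.
    have : q \in [seq q <- primes l | (q %| p.-1)%N].
      by rewrite mem_filter ql andbT; move: qin; rewrite mem_primes => /and3P [].
    by rewrite E.
  left; have : q \in [seq q <- primes l | (q %| p.-1)%N] by rewrite E mem_head.
  by rewrite mem_filter => /andP [].
have finj : {in ps &, injective f}.
  move=> x y xin yin fxy; case: (eqVneq x y) => [//|/eqP nxy].
  have ix : (index x ps < k)%N by rewrite -sz index_mem.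
  have iy : (index y ps < k)%N by rewrite -sz index_mem.
  have nij : index x ps != index y ps.
    apply/negP => /eqP e; apply: nxy.
    by rewrite -(nth_index 0 xin) -(nth_index 0 yin) e.
  have := hq _ _ ix iy nij; rewrite (nth_index 0 xin) (nth_index 0 yin) => hq'.
  exfalso; case: (fP x xin) => [[fx1 fx2] | [fx1 fx2]]; case: (fP y yin) => [[fy1 fy2] | [fy1 fy2]].
  - apply: (hq' (f x)); last by split => //; rewrite fxy.
      by move: fx1; rewrite mem_primes => /and3P [].
    exact: oddpr ol fx1.
  - by apply: (crossC ol n3 (hP x xin) (hP y yin) fy2); rewrite -fy1 -fxy.
  - by apply: (crossC ol n3 (hP y yin) (hP x xin) fx2); rewrite -fx1 fxy.
  - by apply: nxy; rewrite -fx1 -fy1.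
rewrite -sz -(size_map f); apply: uniq_leq_size.
  by rewrite map_inj_in_uniq.
move=> q /mapP [p pin ->]; by case: (fP p pin) => [[] | []] // ->.
Qed.
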